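(* Fix $\epsilon>0$ and $n\in\mathbb{N}$. There is no constant $c$ such that $QK^{\epsilon}(|\sigma\rangle\langle\sigma|)\ge K(\sigma)-c$ for all unit vectors $\sigma\in\mathbb{C}^{2^n}_{alg}$. In particular, it is not the case that $QK^{\epsilon}(|\sigma\rangle\langle\sigma|)$ and $K(\sigma)$ agree up to an additive constant for all unit vectors $\sigma\in\mathbb{C}^{2^n}_{alg}$.
   Context: Let $\mathbb{U}$ be a fixed universal prefix-free Turing machine and $K$ the associated prefix-free Kolmogorov complexity. Finite sets of vectors with complex algebraic entries (and single such vectors) are coded by natural numbers via a fixed canonical effective indexing; for a vector $\sigma$ with complex algebraic entries, $K(\sigma)$ is the prefix-free complexity of its code. $\mathbb{U}(\sigma)\downarrow=F$ means that $\mathbb{U}$ on input $\sigma$ halts and outputs the code of $F$. $\mathbb{C}^{2^n}_{alg}$ denotes the set of vectors in $\mathbb{C}^{2^n}$ all of whose entries are complex algebraic numbers. All logarithms are base 2. For a density matrix $\tau$ on $\mathbb{C}^{2^{n}}$ write $|\tau|=n$. For $\epsilon>0$ define $QK^{\epsilon}(\tau)=\inf\{|\sigma|+\log|F| : \mathbb{U}(\sigma)\downarrow=F,\ F \text{ an orthonormal subset of } \mathbb{C}^{2^{|\tau|}}_{alg},\ \sum_{v\in F}\langle v|\tau|v\rangle>\epsilon\}$, with $\inf\emptyset=\infty$. *)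

(* Defs.v *)
From HB Require Import structures.
From mathcomp Require Import all_boot all_order all_algebra all_field.
From mathcomp Require Import finmap.
From mathcomp Require Import all_classical all_reals.
From mathcomp Require Import all_analysis Rstruct.
Notation R := Rdefinitions.R.

Set Implicit Arguments.
Unset Strict Implicit.
Unset Printing Implicit Defensive.

Import Order.TTheory GRing.Theory Num.Theory.

Inductive rfun : Type :=
| rzero
| rsucc
| rproj (i : nat)
| rcomp (f : rfun) (gs : seq rfun)
| rprec (f g : rfun)                 (* primitive recursion on 1st arg    *)
| rmu (f : rfun).

(* Big-step evaluation: [reval e v y] means program e on input v halts with
   output y (missing arguments default to 0). *)
Inductive reval : rfun -> seq nat -> nat -> Prop :=
| ev_zero v : reval rzero v 0
| ev_succ v : reval rsucc v (head 0%N v).+1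
| ev_proj i v : reval (rproj i) v (nth 0%N v i)
| ev_comp f gs v ws y :
    revals gs v ws -> reval f ws y -> reval (rcomp f gs) v y
| ev_prec0 f g v y : reval f v y -> reval (rprec f g) (0%N :: v) y
| ev_precS f g k v r y :
    reval (rprec f g) (k :: v) r -> reval g (k :: r :: v) y ->
    reval (rprec f g) (k.+1 :: v) y
| ev_mu f v k :
    reval f (k :: v) 0%N ->
    (forall j, (j < k)%N -> exists m, reval f (j :: v) m.+1) ->
    reval (rmu f) v k
with revals : seq rfun -> seq nat -> seq nat -> Prop :=
| evs_nil v : revals [::] v [::]
| evs_cons g gs v y ys :
    reval g v y -> revals gs v ys -> revals (g :: gs) v (y :: ys).

(* Machines: partial maps from binary strings to natural numbers.
   Binary strings are coded by naturals through [pickle] (an effective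
   bijection-onto-its-image of seq bool into nat). *)
Definition machine := seq bool -> option nat.

Definition computable_machine (M : machine) : Prop :=
  exists e : rfun, forall (p : seq bool) (y : nat),
    M p = Some y <-> reval e [:: choice.pickle p] y.

Definition prefix_free (M : machine) : Prop :=
  forall p q : seq bool, M p <> None -> M q <> None -> prefix p q -> p = q.

Definition universal_prefix_free (U : machine) : Prop :=
  [/\ computable_machine U, prefix_free U &
      forall M : machine, computable_machine M -> prefix_free M ->
        exists tau : seq bool, forall p, U (tau ++ p) = M p].

Local Open Scope ring_scope.
Local Open Scope classical_set_scope.

Definition Kc (U : machine) (x : nat) : \bar R :=
  ereal_inf [set ((size p)%:R : R)%:E | p in [set p : seq bool | U p = Some x]].

Definition vec (n : nat) := 'cV[algC]_(2 ^ n).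

Definition adj (m k : nat) (A : 'M[algC]_(m, k)) : 'M[algC]_(k, m) :=
  (map_mx Num.conj A)^T.

Definition inner (n : nat) (u v : vec n) : algC := (adj u *m v) 0 0.

Definition unit_vector (n : nat) (v : vec n) : Prop := inner v v = 1.

Definition orthonormal (n : nat) (F : {fset vec n}) : Prop :=
  forall u v, u \in F -> v \in F -> inner u v = (u == v)%:R.

Definition pure_state (n : nat) (s : vec n) : 'M[algC]_(2 ^ n) := s *m adj s.

Definition expect (n : nat) (tau : 'M[algC]_(2 ^ n)) (v : vec n) : algC :=
  (adj v *m tau *m v) 0 0.

(* The real number corresponding to (the real part of) an algebraic number,
   defined as a Dedekind cut. *)
Definition algC_to_R (x : algC) : R :=
  sup [set (ratr q : R) | q in [set q : rat | ratr q <= 'Re x]].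

Definition log2 (x : R) : R := ln x / ln 2.

Definition QK (U : machine) (eps : R) (n : nat) (tau : 'M[algC]_(2 ^ n)) : \bar R :=
  ereal_inf [set x : \bar R | exists (s : seq bool) (F : {fset vec n}),
     [/\ U s = Some (choice.pickle F), orthonormal F,
         eps < algC_to_R (\sum_(v <- F) expect tau v) &
         x = ((size s)%:R + log2 (size (enum_fset F))%:R)%:E]].

(* Main.v *)
Require Import Defs.
From HB Require Import structures.
From mathcomp Require Import all_boot all_order all_algebra all_field.
From mathcomp Require Import finmap.
From mathcomp Require Import all_classical all_reals.
From mathcomp Require Import all_analysis Rstruct.
From mathcomp Require Import ring lra zify.

Import Order.TTheory GRing.Theory Num.Theory.
Set Implicit Arguments. Unset Strict Implicit. Unset Printing Implicit Defensive.

Fixpoint constN (N : nat) : rfun :=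
  if N is N'.+1 then rcomp rsucc [:: constN N'] else rzero.

Lemma constN_ok N v : reval (constN N) v N.
Proof.
elim: N v => [|N IH] v /=; first exact: ev_zero.
apply: (ev_comp (ws := [:: N])); first by apply: evs_cons; [exact: IH| exact: evs_nil].
exact: ev_succ.
Qed.

Lemma inv_comp f gs v y : reval (rcomp f gs) v y -> exists ws, revals gs v ws /\ reval f ws y.
Proof. move=> H; inversion H; subst; eauto. Qed.
Lemma inv_cons1 g v ws : revals [:: g] v ws -> exists y, ws = [:: y] /\ reval g v y.
Proof. move=> H; inversion H; subst. match goal with h : revals [::] _ _ |- _ => inversion h end; subst; eauto. Qed.
Lemma inv_succ v y : reval rsucc v y -> y = (head 0%N v).+1.
Proof. by move=> H; inversion H. Qed.
Lemma inv_proj i v y : reval (rproj i) v y -> y = nth 0%N v i.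
Proof. by move=> H; inversion H. Qed.
Lemma inv_mu f v k : reval (rmu f) v k -> reval f (k :: v) 0%N.
Proof. by move=> H; inversion H. Qed.

Lemma constN_inv N v y : reval (constN N) v y -> y = N.
Proof.
elim: N v y => [|N IH] v y /= H; first by inversion H.
case/inv_comp: H => ws [/inv_cons1 [z [-> hz]] /inv_succ ->].
by rewrite /= (IH _ _ hz).
Qed.

Definition Mconst (N : nat) : machine := fun p => if p is [::] then Some N else None.

Lemma pickle_nil0 (p : seq bool) : choice.pickle p = 0%N -> p = [::].
Proof.
move=> h. have := choice.pickleK_inv p. by rewrite h => -[<-].
Qed.

Lemma Mconst_comp N : computable_machine (Mconst N).
Proof.
exists (rcomp (constN N) [:: rmu (rproj 1)]) => p y; split.
- case: p => //= -[<-].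
  apply: (ev_comp (ws := [:: 0%N])); last exact: constN_ok.
  apply: evs_cons; last exact: evs_nil.
  apply: ev_mu => //. have -> : choice.pickle ([::] : seq bool) = 0%N by [].
  exact: (ev_proj 1 [:: 0%N; 0%N]).
- case/inv_comp => ws [/inv_cons1 [z [-> /inv_mu /inv_proj /= e0]] /constN_inv ->].
  by rewrite (@pickle_nil0 p (esym e0)).
Qed.

Lemma Mconst_pf N : prefix_free (Mconst N).
Proof. by move=> [|a p] [|b q] //=. Qed.

Lemma U_outputs U (hU : universal_prefix_free U) N : exists s, U s = Some N.
Proof.
case: hU => _ _ /(_ (Mconst N) (Mconst_comp N) (@Mconst_pf N)) [tau Ht].
exists tau. by rewrite -(cats0 tau) Ht.
Qed.

Local Open Scope ring_scope.

Lemma algC_to_R1 : algC_to_R 1 = 1.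
Proof.
have Re1 : 'Re (1 : algC) = 1 by rewrite ReE conjC1 -mulr2n -mulr_natl mulr1 mulfV // pnatr_eq0.
rewrite /algC_to_R Re1; apply/le_anti/andP; split.
- apply: ge_sup; first by exists 1; exists 1%Q; rewrite /= ?rmorph1.
  move=> _ [q hq <-]. rewrite -(rmorph1 (@ratr R)) ler_rat.
  by move: hq; rewrite /= -(rmorph1 (@ratr algC)) ler_rat.
- apply: ub_le_sup; last by exists 1%Q; rewrite /= ?rmorph1.
  exists 1 => _ [q hq <-]. rewrite -(rmorph1 (@ratr R)) ler_rat.
  by move: hq; rewrite /= -(rmorph1 (@ratr algC)) ler_rat.
Qed.

Definition ev (n : nat) (i : 'I_(2 ^ n)) : vec n := delta_mx i 0.

Lemma adj_ev n (i : 'I_(2 ^ n)) : adj (ev i) = delta_mx 0 i.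
Proof.
apply/matrixP => a b; rewrite !mxE.
by rewrite conjC_nat andbC.
Qed.

Lemma inner_ev n (i j : 'I_(2 ^ n)) : inner (ev i) (ev j) = (i == j)%:R :> algC.
Proof.
rewrite /inner adj_ev /ev mul_delta_mx_cond.
by case: (i == j); rewrite ?mulr1n ?mulr0n ?mxE ?eqxx.
Qed.

Lemma ev_inj n : injective (@ev n).
Proof.
move=> i j h. have := inner_ev i j. rewrite h inner_ev eqxx.
by case: eqP => // _ /eqP; rewrite oner_eq0.
Qed.

Definition Fstd n : {fset vec n} := seq_fset tt [seq ev i | i <- enum 'I_(2 ^ n)].

Lemma Fstd_orth n : Defs.orthonormal (Fstd n).
Proof.
move=> u v; rewrite !seq_fsetE => /mapP [i _ ->] /mapP [j _ ->].
by rewrite inner_ev (inj_eq (@ev_inj n)).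
Qed.

Lemma sum_Fstd n (sigma : vec n) :
  \sum_(v <- Fstd n) expect (pure_state sigma) v = inner sigma sigma.
Proof.
rewrite (perm_big _ (seq_fset_perm _ _)) undup_id; last first.
  by rewrite map_inj_uniq ?enum_uniq //; exact: ev_inj.
rewrite big_map big_enum /= /inner mxE.
apply: eq_bigr => i _.
rewrite /expect adj_ev /ev /pure_state -rowE -colE !mxE big_ord1 !mxE mulrC.
done.
Qed.

Lemma QK_bound (U : machine) (s : seq bool) (n : nat) (hU : U s = Some (choice.pickle (Fstd n)))
   (eps : R) (heps1 : eps < 1) (sigma : vec n) :
  unit_vector sigma ->
  (QK U eps (pure_state sigma) <= ((size s)%:R + log2 (size (enum_fset (Fstd n)))%:R)%:E)%E.
Proof.
move=> hu. apply: ereal_inf_lbound. exists s, (Fstd n); split => //.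
- exact: Fstd_orth.
- by rewrite sum_Fstd hu algC_to_R1.
Qed.

Definition wk (k : nat) : algC := 1 - k%:R * 'i.

Lemma wk_conj k : (wk k)^* = 1 + k%:R * 'i.
Proof. by rewrite /wk rmorphB rmorph1 rmorphM rmorph_nat /= conjCi mulrN opprK. Qed.

Lemma wk_neq0 k : wk k != 0.
Proof.
apply/negP => /eqP h.
have : wk k + (wk k)^* = 2%:R by rewrite wk_conj /wk; ring.
by rewrite h conjC0 addr0 => /eqP; rewrite eq_sym pnatr_eq0.
Qed.

Lemma wkc_neq0 k : (wk k)^* != 0.
Proof. by rewrite conjC_eq0 wk_neq0. Qed.

Definition zk (k : nat) : algC := (wk k)^* / wk k.

Lemma zk_norm k : (zk k)^* * zk k = 1.
Proof.
rewrite /zk rmorphM fmorphV /= conjCK.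
have h1 := wk_neq0 k; have h2 := wkc_neq0 k.
by rewrite mulrA divfK // mulfV.
Qed.

Lemma zk_inj : injective zk.
Proof.
move=> k m /eqP; rewrite /zk eqr_div ?wk_neq0 ?wkc_neq0 // !wk_conj /wk => /eqP h.
have E : (1 + k%:R * 'i) * (1 - m%:R * 'i) - (1 + m%:R * 'i) * (1 - k%:R * 'i)
   = 2%:R * (k%:R - m%:R) * 'i :> algC by ring.
move: E; rewrite h subrr => /esym /eqP.
rewrite !mulf_eq0 pnatr_eq0 (negbTE (neq0Ci _)) orbF /= subr_eq0 eqr_nat => /eqP //.
Qed.

Lemma i0_lt n : (0 < 2 ^ n)%N. Proof. by rewrite expn_gt0. Qed.
Definition i0 n : 'I_(2 ^ n) := Ordinal (i0_lt n).

Definition sig (n k : nat) : vec n := zk k *: ev (i0 n).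

Lemma adjZ n (a : algC) (u : vec n) : adj (a *: u) = a^* *: adj u.
Proof. by apply/matrixP => x y; rewrite !mxE rmorphM. Qed.

Lemma sig_unit n k : unit_vector (sig n k).
Proof.
have := inner_ev (i0 n) (i0 n); rewrite eqxx /inner => h.
rewrite /unit_vector /inner /sig adjZ -scalemxAl -scalemxAr mxE [X in _ * X]mxE h mulr1.
exact: (zk_norm k).
Qed.

Lemma sig_inj n : injective (sig n).
Proof.
move=> k m /matrixP /(_ (i0 n) 0); rewrite !mxE eqxx /= !mulr1.
exact: zk_inj.
Qed.

Fixpoint code (p : seq bool) : nat := if p is b :: p' then b + (code p').*2 else 1.

Lemma code_gt0 p : (0 < code p)%N.
Proof. by elim: p => //= b p IH; rewrite -double_gt0 in IH; rewrite (leq_trans IH) // leq_addl. Qed.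

Lemma code_lt p : (code p < 2 ^ (size p).+1)%N.
Proof.
elim: p => //= b p IH. rewrite expnS mul2n.
case: b => /=; rewrite ?add0n ?ltn_double //.
by rewrite add1n ltn_Sdouble.
Qed.

Lemma code_inj : injective code.
Proof.
elim=> [|b p IH] [|c q] //=.
- move=> h; have := code_gt0 q; case: c h => /= h; lia.
- move=> h; have := code_gt0 p; case: b h => /= h; lia.
- move=> h.
  have hb : b = c.
    have := congr1 odd h; rewrite !oddD !odd_double !addbF.
    by move: (b) (c) => [] [] /=.
  rewrite -hb in h *; congr (_ :: _); apply: IH; move: h.
  move/addnI => h; lia.
Qed.

Lemma finite_progs (U : machine) (f : nat -> nat) (finj : injective f) (L : nat) :
  ~ (forall k, exists p : seq bool, U p = Some (f k) /\ (size p < L)%N).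
Proof.
move=> H; have [g hg] := boolp.choice H.
have hlt (k : 'I_(2 ^ L).+1) : (code (g k) < 2 ^ L)%N.
  apply: (leq_trans (code_lt _)); apply: leq_pexp2l => //; exact: (hg k).2.
pose h (k : 'I_(2 ^ L).+1) : 'I_(2 ^ L) := Ordinal (hlt k).
have hinj : injective h.
  move=> a b /(congr1 val) /= /code_inj e.
  apply: val_inj; apply: finj.
  have := (hg a).1; rewrite e (hg b).1. by case.
have := leq_card h hinj; rewrite !card_ord. by rewrite ltnn.
Qed.

Theorem mainTheorem6 (U : machine) (hU : universal_prefix_free U)
    (eps : R) (heps0 : 0 < eps) (heps1 : eps < 1) (n : nat) :
  ~ (exists c : R, forall sigma : vec n, unit_vector sigma ->
        (Kc U (choice.pickle sigma) - c%:E <= QK U eps (pure_state sigma))%E).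
Proof.
case=> c H.
have [s hs] := U_outputs hU (choice.pickle (Fstd n)).
set B : R := (size s)%:R + log2 (size (enum_fset (Fstd n)))%:R.
have Kle k : (Kc U (choice.pickle (sig n k)) <= (B + c)%:E)%E.
  have h1 := H _ (sig_unit n k).
  have h2 := QK_bound (n:=n) hs heps1 (sig_unit n k).
  have := le_trans h1 h2. by rewrite leeBlDr // EFinD.
set x : R := B + c + 1.
have hL : x < (Num.Def.archi_bound `|x|)%:R.
  apply: le_lt_trans (ler_norm x) _. exact: archi_boundP.
apply: (@finite_progs U (fun k => choice.pickle (sig n k)) _ (Num.Def.archi_bound `|x|)).
  move=> a b e. apply: (@sig_inj n).
  have := choice.pickleK_inv (sig n a). by rewrite e choice.pickleK_inv => -[].
move=> k.
have : (Kc U (choice.pickle (sig n k)) < x%:E)%E.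
  apply: le_lt_trans (Kle k) _. by rewrite lte_fin /x ltrDl.
case/ereal_inf_lt => _ [p hp <-]; rewrite lte_fin => hpx.
exists p; split => //.
rewrite -(ltr_nat R). exact: lt_trans hpx hL.
Qed.
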